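(* For every conservative reaction network $(X,\mathscr{R})$ there exists an injective Lewis realization $x\mapsto\Gamma_x$, i.e. a Lewis realization in which distinct compounds $x\neq y$ are assigned non-isomorphic vertex-coloured multigraphs $\Gamma_x,\Gamma_y$.
   Context: A reaction network (RN) $(X,\mathscr{R})$ consists of a finite non-empty set $X$ of species and a finite non-empty set $\mathscr{R}$ of reactions. Each reaction $r$ is given by stoichiometric coefficients $s^-_{xr},s^+_{xr}\in\mathbb{N}_0$. The stoichiometric matrix $S\in\mathbb{Z}^{X\times\mathscr{R}}$ has entries $S_{xr}=s^+_{xr}-s^-_{xr}$. The paper assumes throughout that RNs are closed: every reaction $r$ has $x,y$ with $S_{xr}<0<S_{yr}$. The RN is conservative if there is $m\in\mathbb{R}^X$ with all entries positive and $m^\top S=0$. An sf-instance is a matrix $A\in\mathbb{N}_0^{\mathcal{A}\times X}$ ($\mathcal{A}$ a non-empty finite set) with every column nonzero and $AS=0$. An sf-realization is an sf-instance with $\operatorname{im}A^\top=\ker S^\top$. Given $\mathrm{val}:\mathcal{A}\to\mathbb{N}=\{1,2,\dots\}$, consider multigraphs (loops allowed) with vertex colouring $\alpha:V\to\mathcal{A}$. The degree $d(u)$ is the number of non-loop edge incidences at $u$ plus twice the number of loops at $u$. A Lewis instance assigns vertex-coloured multigraphs $\Gamma_x=(V_x,E_x,\alpha_x)$ to all $x\in X$ such that: - $d(u)=\mathrm{val}(\alpha_x(u))$ for all $u\in V_x$; - the matrix $A_{ax}=|\{u\in V_x:\alpha_x(u)=a\}|$ is an sf-instance. It is a Lewis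 realization if this $A$ is an sf-realization. *)

(* Defs.v *)
From HB Require Import structures.
From mathcomp Require Import all_boot all_order all_algebra.
From mathcomp Require Import reals.
Set Implicit Arguments. Unset Strict Implicit. Unset Printing Implicit Defensive.
Import Order.TTheory GRing.Theory Num.Theory.
Local Open Scope ring_scope.

(* Reaction network: species X (finType), reactions Rx (finType),
   stoichiometric coefficients sminus x r = s^-_{xr}, splus x r = s^+_{xr}. *)
Definition stoich (X Rx : finType) (sminus splus : X -> Rx -> nat)
  (x : X) (r : Rx) : int := (splus x r)%:Z - (sminus x r)%:Z.

Definition closed_RN (X Rx : finType) (sminus splus : X -> Rx -> nat) : Prop :=
  forall r : Rx, exists x y : X,
    stoich sminus splus x r < 0 /\ 0 < stoich sminus splus y r.

Definition conservative (R : realType) (X Rx : finType)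
  (sminus splus : X -> Rx -> nat) : Prop :=
  exists m : X -> R, (forall x, 0 < m x) /\
    forall r : Rx, \sum_(x : X) m x * (stoich sminus splus x r)%:~R = 0.

Definition sf_instance (X Rx : finType) (sminus splus : X -> Rx -> nat)
  (k : nat) (A : 'I_k -> X -> nat) : Prop :=
  (forall x : X, exists a : 'I_k, A a x != 0%N) /\
  (forall (a : 'I_k) (r : Rx),
     \sum_(x : X) (A a x)%:Z * stoich sminus splus x r = 0).

Definition sf_realization (R : realType) (X Rx : finType)
  (sminus splus : X -> Rx -> nat) (k : nat) (A : 'I_k -> X -> nat) : Prop :=
  sf_instance sminus splus A /\
  forall v : X -> R,
    (exists w : 'I_k -> R, forall x, v x = \sum_(a : 'I_k) w a * (A a x)%:R)
    <-> (forall r : Rx, \sum_(x : X) v x * (stoich sminus splus x r)%:~R = 0).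

(* Vertex-coloured multigraph (loops allowed) with colours in 'I_k:
   vertices 'I_nv, colouring col, and mult u v = number of edges between
   u and v (mult u u = number of loops at u), symmetric. *)
Record cmgraph (k : nat) := CMGraph {
  nv : nat;
  col : 'I_nv -> 'I_k;
  mult : 'I_nv -> 'I_nv -> nat;
  mult_sym : forall u v, mult u v = mult v u }.
Arguments nv {k} c.
Arguments col {k} c _.
Arguments mult {k} c _ _.

Definition deg (k : nat) (G : cmgraph k) (u : 'I_(nv G)) : nat :=
  (\sum_(v : 'I_(nv G) | v != u) mult G u v + 2 * mult G u u)%N.

Definition cmg_iso (k : nat) (G H : cmgraph k) : Prop :=
  exists f : 'I_(nv G) -> 'I_(nv H),
    bijective f /\ (forall u, col H (f u) = col G u) /\
    (forall u v, mult H (f u) (f v) = mult G u v).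

Definition lewis_matrix (k : nat) (X : finType) (G : X -> cmgraph k)
  (a : 'I_k) (x : X) : nat := #|[set u : 'I_(nv (G x)) | col (G x) u == a]|.

Definition lewis_instance (X Rx : finType) (sminus splus : X -> Rx -> nat)
  (k : nat) (val : 'I_k -> nat) (G : X -> cmgraph k) : Prop :=
  (forall (x : X) (u : 'I_(nv (G x))), deg u = val (col (G x) u)) /\
  sf_instance sminus splus (lewis_matrix G).

Definition lewis_realization (R : realType) (X Rx : finType)
  (sminus splus : X -> Rx -> nat)
  (k : nat) (val : 'I_k -> nat) (G : X -> cmgraph k) : Prop :=
  (forall (x : X) (u : 'I_(nv (G x))), deg u = val (col (G x) u)) /\
  sf_realization R sminus splus (lewis_matrix G).

(* Main.v *)
Require Import Defs.
From HB Require Import structures.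
From mathcomp Require Import all_boot all_order all_algebra.
From mathcomp Require Import reals lra zify ring.
Set Implicit Arguments. Unset Strict Implicit. Unset Printing Implicit Defensive.
Import Order.TTheory GRing.Theory Num.Theory.
Local Open Scope ring_scope.

Lemma clear_den (m n : nat) (M : 'M[rat]_(m, n)) :
  exists (d : int) (Z : 'M[int]_(m, n)), 0 < d /\
    forall i j, (Z i j)%:~R = d%:~R * M i j.
Proof.
pose d := \prod_(ij : 'I_m * 'I_n) denq (M ij.1 ij.2).
exists d, (\matrix_(i, j) (numq (M i j) *
   \prod_(ij : 'I_m * 'I_n | ij != (i, j)) denq (M ij.1 ij.2))).
split.
  by apply: prodr_gt0 => ij _; apply: denq_gt0.
move=> i j; rewrite mxE /d [in RHS](bigD1 (i, j)) //=.
rewrite !rmorphM /= numqE.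
by rewrite [RHS]mulrC mulrA.
Qed.

Lemma sumX (X : finType) (V : nmodType) (G : 'I_#|X| -> V) :
  \sum_(i < #|X|) G i = \sum_(x : X) G (enum_rank x).
Proof.
rewrite (reindex (@enum_rank X)) //; apply: onW_bij.
by exists enum_val; [apply: enum_rankK | apply: enum_valK].
Qed.

Definition SZ (X Rx : finType) (sm sp : X -> Rx -> nat) : 'M[int]_(#|X|, #|Rx|) :=
  \matrix_(i, j) stoich sm sp (enum_val i) (enum_val j).

Lemma kernel_basis (R : realType) (m p : nat) (S : 'M[int]_(m, p)) :
  exists ZK : 'M[int]_m, ZK *m S = 0 /\
  forall v : 'rV[R]_m, v *m map_mx intr S = 0 ->
     exists w : 'rV[R]_m, v = w *m map_mx intr ZK.
Proof.
pose SQ := map_mx (intr : int -> rat) S.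
pose K := kermx SQ.
have [d [Z [d0 HZ]]] := clear_den K.
have dQ : (d%:~R : rat) != 0 by rewrite intr_eq0 gt_eqF.
exists Z; split.
  have E : map_mx (intr : int -> rat) Z = d%:~R *: K.
    by apply/matrixP => i j; rewrite [LHS]mxE [RHS]mxE HZ.
  have E2 : map_mx (intr : int -> rat) (Z *m S) = 0.
    by rewrite map_mxM E -scalemxAl mulmx_ker scaler0.
  apply/matrixP => i j; apply: (@intr_inj rat).
  have := congr1 (fun M : 'M[rat]_(m, p) => M i j) E2; rewrite [X in X = _ -> _]mxE mxE => ->; by rewrite !mxE.
move=> v hv.
have hS : map_mx intr S = map_mx (@ratr R) SQ.
  by apply/matrixP => i j; rewrite !mxE ratr_int.
have : (v <= kermx (map_mx (@ratr R) SQ))%MS by rewrite -hS; apply/sub_kermxP.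
rewrite -map_kermx -/K => /submxP [D ->].
have EK : map_mx (@ratr R) K = (d%:~R)^-1 *: map_mx intr Z.
  apply/matrixP => i j; rewrite [LHS]mxE [RHS]mxE [X in _ * X]mxE.
  have -> : K i j = (d%:~R)^-1 * (Z i j)%:~R by rewrite HZ mulKf.
  by rewrite rmorphM /= fmorphV /= !ratr_int.
exists ((d%:~R)^-1 *: D); by rewrite EK -scalemxAl scalemxAr.
Qed.

Lemma single_le (R : numDomainType) (n : nat) (F : 'I_n -> R) (j : 'I_n) :
  (forall i, 0 <= F i) -> F j <= \sum_i F i.
Proof. by move=> h; rewrite (bigD1 j) //= lerDl sumr_ge0. Qed.

Lemma pos_kernel (R : realType) (m p : nat) (S : 'M[int]_(m, p))
  (ZK : 'M[int]_m) (mv : 'rV[R]_m) :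
  (forall j, 0 < mv 0 j) -> ZK *m S = 0 ->
  (exists w : 'rV[R]_m, mv = w *m map_mx intr ZK) ->
  exists zp : 'rV[int]_m, (forall j, 0 < zp 0 j) /\ zp *m S = 0.
Proof.
move=> mpos hZ [w hw].
pose ZR := map_mx (intr : int -> R) ZK.
pose B j := \sum_i `|ZR i j| + 1.
have Bpos j : 0 < B j by rewrite /B ltr_pwDr // sumr_ge0.
pose N := (Num.trunc (\sum_j B j / mv 0 j)).+1.
have hN j : B j <= N%:R * mv 0 j.
  rewrite -ler_pdivrMr //; apply: le_trans (ltW (truncnS_gt _)).
  by apply: (single_le (F := fun j => B j / mv 0 j)) => i; rewrite divr_ge0 // ltW.
pose zq := \row_i Num.floor (N%:R * w 0 i).
exists (zq *m ZK); split; last by rewrite -mulmxA hZ mulmx0.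
move=> j; rewrite -(ltr0z R).
have E1 : ((zq *m ZK) 0 j)%:~R = \sum_i (Num.floor (N%:R * w 0 i))%:~R * ZR i j :> R.
  rewrite mxE rmorph_sum /=; apply: eq_bigr => i _.
  by rewrite rmorphM /= !mxE.
have E2 : N%:R * mv 0 j = \sum_i (N%:R * w 0 i) * ZR i j.
  rewrite hw mxE mulr_sumr; apply: eq_bigr => i _; by rewrite mulrA.
have E3 : N%:R * mv 0 j - ((zq *m ZK) 0 j)%:~R =
    \sum_i (N%:R * w 0 i - (Num.floor (N%:R * w 0 i))%:~R) * ZR i j.
  by rewrite E1 E2 -sumrB; apply: eq_bigr => i _; rewrite mulrBl.
have E4 : \sum_i (N%:R * w 0 i - (Num.floor (N%:R * w 0 i))%:~R) * ZR i j
    <= \sum_i `|ZR i j|.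
  apply: ler_sum => i _.
  apply: le_trans (ler_norm _) _; rewrite normrM.
  have h1 := floor_le_tmp (N%:R * w 0 i).
  have h2 := lt_succ_floor (N%:R * w 0 i).
  rewrite ger0_norm ?subr_ge0 //; apply: ler_piMl => //.
  by rewrite lerBlDr addrC; move: h2; rewrite intrD => /ltW.
have := hN j; rewrite /B; lra.
Qed.

Definition mkmult (n M i : nat) (u v : 'I_n) : nat :=
  if u == v then (if (u < 2)%N then (M - i)%N else M)
  else if (u + v == 1)%N then (2 * i)%N else 0%N.

Lemma mkmult_sym n M i u v : @mkmult n M i u v = mkmult M i v u.
Proof.
rewrite /mkmult eq_sym addnC; case: eqP => [->|] //.
Qed.

Definition mkG (k : nat) (s : seq 'I_k) (d : 'I_k) (M i : nat) : cmgraph k :=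
  @CMGraph k (size s) (fun u => nth d s u) (@mkmult (size s) M i)
    (@mkmult_sym (size s) M i).

Lemma offdiag n M i (u : 'I_n) : (2 <= n)%N ->
  (\sum_(v | v != u) mkmult M i u v = if (u < 2)%N then 2 * i else 0)%N.
Proof.
move=> n2.
case: ltnP => hu.
  have hv : (1 - u < n)%N by apply: leq_ltn_trans n2; rewrite leq_subr.
  pose v0 := Ordinal hv.
  have v0u : v0 != u by apply/eqP => /(congr1 val) /=; case: (val u) hu => [|[|]].
  rewrite (bigD1 v0) //= big1 ?addn0.
    rewrite /mkmult eq_sym (negbTE v0u) /=.
    by case: (val u) hu => [|[|]].
  move=> v /andP [vu vv0]; rewrite /mkmult eq_sym (negbTE vu).
  case: ifP => // /eqP h; case/negP: vv0; apply/eqP/val_inj => /=.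
  by rewrite -h addKn.
rewrite big1 // => v vu; rewrite /mkmult eq_sym (negbTE vu).
case: ifP => // /eqP h; exfalso; move: hu h; lia.
Qed.

Lemma deg_mkG k (s : seq 'I_k) d M i (u : 'I_(nv (mkG s d M i))) :
  (2 <= size s)%N -> (i <= M)%N -> deg u = (2 * M)%N.
Proof.
move=> h2 hi; rewrite /deg /= offdiag // /mkmult eqxx.
case: ifP => _; last by rewrite add0n.
by rewrite -mulnDr subnKC.
Qed.

Definition tot k (G : cmgraph k) : nat := (\sum_u \sum_v mult G u v)%N.
Definition dg k (G : cmgraph k) : nat := (\sum_u mult G u u)%N.

Lemma tot_mkG k (s : seq 'I_k) d M i :
  (2 <= size s)%N -> tot (mkG s d M i) = (dg (mkG s d M i) + 4 * i)%N.
Proof.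
move=> h2; rewrite /tot /dg /=.
rewrite (eq_bigr (fun u => mkmult M i u u + (if (u < 2)%N then 2 * i else 0))%N).
  rewrite big_split /=; congr (_ + _)%N.
  have h0 : (0 < size s)%N by apply: leq_trans h2.
  have h1 : (1 < size s)%N by [].
  rewrite (bigD1 (Ordinal h0)) //= (bigD1 (Ordinal h1)) //= big1 ?addn0.
    by rewrite -mulnDl.
  move=> u /andP [u0 u1]; case: ifP => // hu.
  move: u0 u1; case: u hu => [[|[|]]] //= ? ? .
move=> u _; rewrite (bigD1 u) //= offdiag //.
Qed.

Lemma iso_inv k (G H : cmgraph k) : cmg_iso G H -> tot G = tot H /\ dg G = dg H.
Proof.
move=> [f [fb [_ fm]]].
have bij : {on [pred i | true], bijective f} by apply: onW_bij.
split.
  rewrite /tot (reindex f) //=; apply: eq_bigr => u _.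
  by rewrite (reindex f) //=; apply: eq_bigr => v _; rewrite fm.
by rewrite /dg (reindex f) //=; apply: eq_bigr => u _; rewrite fm.
Qed.

Lemma card_nth (T : eqType) (s : seq T) (d : T) (P : pred T) :
  #|[set u : 'I_(size s) | P (nth d s u)]| = count P s.
Proof.
rewrite -sum1_count (big_nth d) big_mkord -sum1_card.
by apply: eq_bigl => u; rewrite inE.
Qed.

Lemma rowker (R : realType) (X Rx : finType) (sm sp : X -> Rx -> nat) (v : X -> R) :
  (forall r, \sum_x v x * (stoich sm sp x r)%:~R = 0) ->
  (\row_i v (enum_val i)) *m map_mx intr (SZ sm sp) = 0.
Proof.
move=> hv; apply/matrixP => i j; rewrite [RHS]mxE mxE.
rewrite sumX -[RHS](hv (enum_val j)); apply: eq_bigr => x _.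
by rewrite !mxE !enum_rankK.
Qed.

Lemma sf_dir1 (R : realType) (X Rx : finType) (sm sp : X -> Rx -> nat) (k : nat)
  (A : 'I_k -> X -> nat) (v : X -> R) :
  sf_instance sm sp A ->
  (exists w : 'I_k -> R, forall x, v x = \sum_(a : 'I_k) w a * (A a x)%:R) ->
  (forall r : Rx, \sum_(x : X) v x * (stoich sm sp x r)%:~R = 0).
Proof.
move=> [_ hA] [w hw] r.
under eq_bigr do rewrite hw mulr_suml.
rewrite exchange_big /= big1 // => a _.
have := congr1 (fun z : int => (w a) * z%:~R) (hA a r).
rewrite mulr0 rmorph_sum mulr_sumr /= => h; rewrite -[RHS]h; apply: eq_bigr => x _.
by rewrite rmorphM /= mulrA.
Qed.

Lemma sf_ext (R : realType) (X Rx : finType) (sm sp : X -> Rx -> nat) (k : nat)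
  (A B : 'I_k -> X -> nat) :
  (forall a x, A a x = B a x) -> sf_realization R sm sp A -> sf_realization R sm sp B.
Proof.
move=> hAB [[h1 h2] h3]; split; first split.
- by move=> x; have [a ha] := h1 x; exists a; rewrite -hAB.
- by move=> a r; rewrite -[RHS](h2 a r); apply: eq_bigr => x _; rewrite hAB.
- move=> v; rewrite -h3; split => [[w hw]|[w hw]]; exists w => x; rewrite hw;
  by apply: eq_bigr => a _; rewrite hAB.
Qed.

Lemma count_flat (k : nat) (X : finType) (A : 'I_k -> X -> nat) (x : X) (a : 'I_k) :
  count (pred1 a) (flatten [seq nseq (A b x) b | b <- enum 'I_k]) = A a x.
Proof.
rewrite count_flatten -map_comp sumnE big_map.
rewrite big_enum /= (bigD1 a) //= big1 ?addn0.
  by rewrite count_nseq /= eqxx mul1n.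
by move=> b hb; rewrite count_nseq /= (negbTE hb) mul0n.
Qed.

Unset Implicit Arguments.

Theorem proposition14 (R : realType) (X Rx : finType)
  (sminus splus : X -> Rx -> nat) :
  (0 < #|X|)%N -> (0 < #|Rx|)%N ->
  closed_RN sminus splus ->
  conservative R sminus splus ->
  exists (k : nat) (val : 'I_k -> nat) (G : X -> cmgraph k),
    (0 < k)%N /\ (forall a, 0 < val a)%N /\
    lewis_realization R sminus splus val G /\
    (forall x y : X, x != y -> ~ cmg_iso (G x) (G y)).
Proof.
move=> hX _ _ [m [mpos hm]].
set n := #|X|.
pose S := SZ sminus splus.
have [ZK [hZK kerR]] := kernel_basis R S.
pose mv : 'rV[R]_n := \row_i m (enum_val i).
have [zp [zppos hzp]] : exists zp : 'rV[int]_n, (forall j, 0 < zp 0 j) /\ zp *m S = 0.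
  apply: (@pos_kernel R n _ S ZK mv) => //; first by move=> j; rewrite mxE.
  by apply: kerR; apply: rowker.
pose T : int := \sum_i \sum_j `|ZK i j|.
pose Zrow (a : 'I_(n + 1)) (j : 'I_n) : int :=
  match split a with inl i => ZK i j + T * zp 0 j | inr _ => zp 0 j end.
have Zl i j : Zrow (lshift 1 i) j = ZK i j + T * zp 0 j.
  by rewrite /Zrow (unsplitK (inl i : 'I_n + 'I_1)).
have Zr i j : Zrow (rshift n i) j = zp 0 j.
  by rewrite /Zrow (unsplitK (inr i : 'I_n + 'I_1)).
have Zge0 a j : 0 <= Zrow a j.
  rewrite -(splitK a); case: (split a) => [i|i] /=; last first.
    by rewrite Zr ltW.
  rewrite Zl.
  have h1 : `|ZK i j| <= T.
    apply: le_trans (single_le (F := fun i => \sum_j `|ZK i j|) i _) => //.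
      exact: (single_le (F := fun j => `|ZK i j|)).
    by move=> i0; apply: sumr_ge0.
  have h2 := zppos j.
  have h3 : - ZK i j <= `|ZK i j| by rewrite -normrN ler_norm.
  have h4 : T <= T * zp 0 j by rewrite ler_peMr // (le_trans _ h1).
  lia.
pose A (a : 'I_(n + 1)) (x : X) : nat := (2 * `|Zrow a (enum_rank x)|)%N.
have AZ a x : (A a x)%:Z = 2 * Zrow a (enum_rank x).
  by rewrite /A PoszM gez0_abs.
have AR a x : (A a x)%:R = 2 * (Zrow a (enum_rank x))%:~R :> R.
  by rewrite -[(A a x)%:R]/((A a x)%:Z%:~R) AZ rmorphM.
pose d : 'I_(n + 1) := rshift n (ord0 : 'I_1).
pose sx (x : X) := flatten [seq nseq (A b x) b | b <- enum 'I_(n + 1)].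
pose G (x : X) := mkG (sx x) d n (enum_rank x).
have size2 x : (2 <= size (sx x))%N.
  apply: leq_trans (count_size (pred1 d) _); rewrite count_flat /A Zr.
  have := zppos (enum_rank x); lia.
have LM a x : lewis_matrix G a x = A a x.
  by rewrite /lewis_matrix /= (card_nth (sx x) d (pred1 a)) count_flat.
have degG x (u : 'I_(nv (G x))) : deg u = (2 * n)%N.
  by apply: deg_mkG => //; apply: ltnW.
exists (n + 1)%N, (fun _ => (2 * n)%N), G.
split; first by rewrite addn1.
split; first by move=> _; rewrite muln_gt0.
split; last first.
  move=> x y xy iso; have [h1 h2] := iso_inv iso.
  move: h1; rewrite !tot_mkG // h2 => /eqP; rewrite eqn_add2l eqn_mul2l /=.
  by move/eqP/val_inj/enum_rank_inj => exy; rewrite exy eqxx in xy.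
split; first by move=> x u; apply: degG.
apply: (sf_ext (A := A)) => //.
have inst : sf_instance sminus splus A.
  split.
    move=> x; exists d; rewrite /A Zr.
    have := zppos (enum_rank x); lia.
  move=> a r.
  under eq_bigr do rewrite AZ -mulrA.
  rewrite -mulr_sumr.
  suff -> : \sum_x Zrow a (enum_rank x) * stoich sminus splus x r = 0 by rewrite mulr0.
  transitivity (\sum_x Zrow a (enum_rank x) * S (enum_rank x) (enum_rank r)).
    by apply: eq_bigr => x _; rewrite /S /SZ mxE !enum_rankK.
  rewrite -(sumX (fun j => Zrow a j * S j (enum_rank r))).
  rewrite -(splitK a); case: (split a) => i /=.
    under eq_bigr do rewrite Zl mulrDl -mulrA.
    rewrite big_split /= -mulr_sumr.
    move/matrixP: hZK => /(_ i (enum_rank r)); rewrite [RHS]mxE mxE => ->.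
    move/matrixP: hzp => /(_ 0 (enum_rank r)); rewrite [RHS]mxE mxE => ->.
    by rewrite mulr0 addr0.
  under eq_bigr do rewrite Zr.
  by move/matrixP: hzp => /(_ 0 (enum_rank r)); rewrite [RHS]mxE mxE => ->.
split => // v; split; first exact: sf_dir1.
move=> hv; have [w hw] := kerR _ (rowker hv).
exists (fun a => match split a with inl i => w 0 i / 2
        | inr _ => - (T%:~R * \sum_i w 0 i) / 2 end) => x.
have vx : v x = \sum_i w 0 i * (ZK i (enum_rank x))%:~R.
  have := congr1 (fun M : 'rV[R]_n => M 0 (enum_rank x)) hw.
  by rewrite [LHS]mxE enum_rankK mxE => ->; apply: eq_bigr => i _; rewrite mxE.
rewrite vx big_split_ord /= big_ord1.
rewrite [in RHS](eq_bigr (fun i => w 0 i * (ZK i (enum_rank x))%:~R +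
    w 0 i * (T%:~R * (zp 0 (enum_rank x))%:~R))); last first.
    move=> i _; rewrite (unsplitK (inl i : 'I_n + 'I_1)) AR Zl rmorphD rmorphM /=.
  field.
  done.
rewrite big_split /= -mulr_suml (unsplitK (inr ord0 : 'I_n + 'I_1)) AR Zr.
field. all: try by rewrite pnatr_eq0.
all: done.
Qed.
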